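(* Let $|\psi\rangle\in\mathcal{H}$ be a normalized pure state and $\mathcal{N}=\{\mathcal{N}_k\}$ a non-trivial neighborhood structure. Suppose there exists a Hermitian operator of the form $\mathbb{W}=\sum_k\mathbb{W}_{\mathcal{N}_k}\otimes I_{\overline{\mathcal{N}}_k}$ (each $\mathbb{W}_{\mathcal{N}_k}$ acting on $\bigotimes_{a\in\mathcal{N}_k}\mathcal{H}_a$) such that $\langle\psi|\mathbb{W}|\psi\rangle<\langle\phi|\mathbb{W}|\phi\rangle$ for every normalized $|\phi\rangle\in\mathcal{H}_{\mathcal{N}}(|\psi\rangle)$ with $|\phi\rangle\langle\phi|\neq|\psi\rangle\langle\psi|$. Then $|\psi\rangle$ is UDA relative to $\mathcal{N}$.
   Context: $\mathcal{H}=\bigotimes_{a=1}^N\mathcal{H}_a$ is a finite-dimensional multipartite Hilbert space; $\mathcal{D}(\mathcal{H})$ is the set of density operators. A neighborhood is $\mathcal{N}_k\subsetneq\{1,\dots,N\}$, with complement $\overline{\mathcal{N}}_k$; a neighborhood structure is a finite collection of neighborhoods, non-trivial if every index lies in some neighborhood and each neighborhood intersects another. For a state $\rho$, $\rho_{\mathcal{N}_k}=\mathrm{tr}_{\overline{\mathcal{N}}_k}\rho$. The DQLS subspace of $|\psi\rangle$ is $\mathcal{H}_{\mathcal{N}}(|\psi\rangle)=\bigcap_k\mathrm{supp}(\rho_{\mathcal{N}_k}\otimes I_{\overline{\mathcal{N}}_k})$ with $\rho=|\psi\rangle\langle\psi|$. A state $\rho$ is UDA (uniquely determined among all states) relative to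 $\mathcal{N}$ if no $\sigma\in\mathcal{D}(\mathcal{H})$ with $\sigma\ne\rho$ has $\sigma_{\mathcal{N}_k}=\rho_{\mathcal{N}_k}$ for all $\mathcal{N}_k\in\mathcal{N}$. *)

(* Defs.v *)
From HB Require Import structures.
From mathcomp Require Import all_boot all_order all_algebra all_field.

Set Implicit Arguments.
Unset Strict Implicit.
Unset Printing Implicit Defensive.

Import Order.TTheory GRing.Theory Num.Theory.
Local Open Scope ring_scope.

(* Parties are indexed by 'I_N; party a has Hilbert space H_a = C^{(d a).+1}.
   A basis vector of H = ⊗_a H_a is a configuration x : cfg d. *)
Definition cfg (N : nat) (d : 'I_N -> nat) := {dffun forall a : 'I_N, 'I_(d a).+1}.

(* Basis of the subsystem ⊗_{a ∈ S} H_a: configurations which are 0 outside S. *)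
Definition supported (N : nat) (d : 'I_N -> nat) (S : {set 'I_N}) (u : cfg d) : bool :=
  [forall a, (a \notin S) ==> (u a == ord0)].

Definition cfgS (N : nat) (d : 'I_N -> nat) (S : {set 'I_N}) :=
  {u : cfg d | supported S u}.

Definition op (I : finType) := I -> I -> algC.
Definition vec (I : finType) := I -> algC.

Definition rst_fun (N : nat) (d : 'I_N -> nat) (S : {set 'I_N}) (x : cfg d) : cfg d :=
  @finfun _ (fun a => 'I_(d a).+1) (fun a => if a \in S then x a else ord0).

Lemma rst_proof (N : nat) (d : 'I_N -> nat) (S : {set 'I_N}) (x : cfg d) :
  supported S (rst_fun S x).
Proof.
apply/forallP => a; apply/implyP => Ha.
by rewrite /rst_fun ffunE (negbTE Ha).
Qed.

Arguments rst_fun {N d} S x.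
Definition rst (N : nat) (d : 'I_N -> nat) (S : {set 'I_N}) (x : cfg d) : cfgS d S :=
  exist _ (rst_fun S x) (rst_proof S x).

Arguments rst {N d} S x.

(* u ⊗ w, with u a basis vector of H_S and w one of H_{complement of S} *)
Definition join (N : nat) (d : 'I_N -> nat) (S : {set 'I_N})
  (u : cfgS d S) (w : cfgS d (~: S)) : cfg d :=
  @finfun _ (fun a => 'I_(d a).+1) (fun a => if a \in S then val u a else val w a).

Definition ptrace (N : nat) (d : 'I_N -> nat) (S : {set 'I_N}) (rho : op (cfg d))
  : op (cfgS d S) :=
  fun u v => \sum_(w : cfgS d (~: S)) rho (join u w) (join v w).

Arguments ptrace {N d} S rho _ _.

Definition tensI (N : nat) (d : 'I_N -> nat) (S : {set 'I_N}) (B : op (cfgS d S))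
  : op (cfg d) :=
  fun x y => if rst (~: S) x == rst (~: S) y then B (rst S x) (rst S y) else 0.

Definition apply_op (I : finType) (A : op I) (v : vec I) : vec I :=
  fun x => \sum_y A x y * v y.

Definition supp_op (I : finType) (A : op I) (v : vec I) : Prop :=
  exists u : vec I, v = apply_op A u.

Definition proj_op (I : finType) (psi : vec I) : op I :=
  fun x y => psi x * (psi y)^*.

Definition normalized_vec (I : finType) (psi : vec I) : Prop :=
  \sum_x psi x * (psi x)^* = 1.

Definition herm_op (I : finType) (A : op I) : Prop :=
  forall x y, A y x = (A x y)^*.

Definition psd_op (I : finType) (A : op I) : Prop :=
  forall v : vec I, 0 <= \sum_x \sum_y (v x)^* * A x y * v y.

Definition density_op (I : finType) (A : op I) : Prop :=
  herm_op A /\ psd_op A /\ \sum_x A x x = 1.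

Definition expect_op (I : finType) (A : op I) (psi : vec I) : algC :=
  \sum_x \sum_y (psi x)^* * A x y * psi y.

Definition nontrivial_nbhd (N K : nat) (nb : 'I_K -> {set 'I_N}) : Prop :=
  (forall k, nb k \proper [set: 'I_N]) /\
  (forall a : 'I_N, exists k, a \in nb k) /\
  (forall k, exists k', k' != k /\ nb k :&: nb k' != set0).

Definition DQLS (N : nat) (d : 'I_N -> nat) (K : nat) (nb : 'I_K -> {set 'I_N})
  (psi : vec (cfg d)) (phi : vec (cfg d)) : Prop :=
  forall k, supp_op (tensI (ptrace (nb k) (proj_op psi))) phi.

Definition UDA (N : nat) (d : 'I_N -> nat) (K : nat) (nb : 'I_K -> {set 'I_N})
  (rho : op (cfg d)) : Prop :=
  forall sigma : op (cfg d), density_op sigma ->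
    (forall k, ptrace (nb k) sigma = ptrace (nb k) rho) -> sigma = rho.

Definition Wsum (N : nat) (d : 'I_N -> nat) (K : nat) (nb : 'I_K -> {set 'I_N})
  (Wk : forall k : 'I_K, op (cfgS d (nb k))) : op (cfg d) :=
  fun x y => \sum_(k < K) tensI (Wk k) x y.

(* Main.v *)
Require Import Defs.
From HB Require Import structures.
From mathcomp Require Import all_boot all_order all_algebra all_field.
From mathcomp Require Import ring.
From Stdlib Require Import FunctionalExtensionality Classical.
Import Order.TTheory GRing.Theory Num.Theory.
Local Open Scope ring_scope.
Set Implicit Arguments.
Unset Strict Implicit.
Unset Printing Implicit Defensive.

Section Gen.
Variable I : finType.

Definition bf (A : op I) (v w : vec I) : algC :=
  \sum_x \sum_y (v x)^* * A x y * w y.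
Definition dot (v w : vec I) : algC := \sum_x (v x)^* * w x.
Definition delta (x : I) : vec I := fun a => (a == x)%:R.
Definition outer (s : seq (vec I)) : op I :=
  fun x y => \sum_(v <- s) v x * (v y)^*.

Lemma sum_delta (x : I) (F : I -> algC) : \sum_a (a == x)%:R * F a = F x.
Proof.
rewrite (bigD1 x) //= eqxx mul1r big1 ?addr0 // => a /negbTE ->; by rewrite mul0r.
Qed.

Lemma sum_deltar (x : I) (F : I -> algC) : \sum_a F a * (a == x)%:R = F x.
Proof. rewrite -(sum_delta x F); apply: eq_bigr => a _; by rewrite mulrC. Qed.

Lemma bf_delta (A : op I) x y t u :
  bf A (fun a => t * delta x a) (fun a => u * delta y a) = t^* * u * A x y.
Proof.
rewrite /bf /delta.
transitivity (\sum_a (a == x)%:R * (t^* * \sum_b (b == y)%:R * (A a b * u))).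
  apply: eq_bigr => a _; rewrite mulr_sumr mulr_sumr; apply: eq_bigr => b _.
  rewrite rmorphM /= (_ : ((a == x)%:R : algC)^* = (a == x)%:R); last first.
    by case: (a == x); rewrite ?rmorph1 ?rmorph0.
  ring.
rewrite sum_delta sum_delta; rewrite mulrCA; ring.
Qed.

Lemma bfDl (A : op I) v1 v2 w :
  bf A (fun a => v1 a + v2 a) w = bf A v1 w + bf A v2 w.
Proof.
rewrite /bf -big_split /=; apply: eq_bigr => x _.
rewrite -big_split /=; apply: eq_bigr => y _; by rewrite rmorphD /= !mulrDl.
Qed.

Lemma bfDr (A : op I) v w1 w2 :
  bf A v (fun a => w1 a + w2 a) = bf A v w1 + bf A v w2.
Proof.
rewrite /bf -big_split /=; apply: eq_bigr => x _.
rewrite -big_split /=; apply: eq_bigr => y _; by rewrite mulrDr.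
Qed.

Lemma herm_bf (A : op I) v w : herm_op A -> (bf A v w)^* = bf A w v.
Proof.
move=> HA; rewrite /bf rmorph_sum /= exchange_big; apply: eq_bigr => y _.
rewrite rmorph_sum /=; apply: eq_bigr => x _.
by rewrite !rmorphM /= conjCK -HA; ring.
Qed.

Lemma psd_zero (A : op I) x y : herm_op A -> psd_op A ->
  A x x = 0 -> A y y = 0 -> A x y = 0.
Proof.
move=> HA PA Hx Hy.
set t := - A x y.
have := PA (fun a => t * delta x a + 1 * delta y a).
rewrite -/(bf A _ _) bfDl !bfDr !bf_delta Hx Hy !mulr0 add0r addr0.
rewrite (HA x y) /t rmorphN /= rmorph1 !mul1r mulr1.
rewrite mulNr mulNr -opprD [_^* * _]mulrC -mulr2n oppr_ge0 pmulrn_lle0 // => H2.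
apply/eqP; rewrite -mul_conjC_eq0 eq_le H2 mul_conjC_ge0 //.
Qed.
Lemma bfZl (A : op I) k v w : bf A (fun a => k * v a) w = k^* * bf A v w.
Proof.
rewrite /bf mulr_sumr; apply: eq_bigr => x _; rewrite mulr_sumr; apply: eq_bigr => y _.
by rewrite rmorphM /= !mulrA.
Qed.

Lemma bfZr (A : op I) k v w : bf A v (fun a => k * w a) = k * bf A v w.
Proof.
rewrite /bf mulr_sumr; apply: eq_bigr => x _; rewrite mulr_sumr; apply: eq_bigr => y _.
by rewrite mulrCA.
Qed.

Lemma conj_nat (n : nat) : ((n%:R : algC)^*) = n%:R.
Proof. by rewrite rmorph_nat. Qed.

Lemma bf_deltal (A : op I) x v : bf A (delta x) v = \sum_b A x b * v b.
Proof.
rewrite /bf /delta.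
rewrite -(sum_delta x (fun a => \sum_b A a b * v b)).
apply: eq_bigr => a _; rewrite conj_nat mulr_sumr; apply: eq_bigr => b _.
by rewrite mulrA.
Qed.

Lemma ge0_conj (z : algC) : 0 <= z -> z^* = z.
Proof. by move=> H; apply: conj_Creal; apply: ger0_real. Qed.

Lemma funext2 (A B : op I) : (forall x y, A x y = B x y) -> A = B.
Proof.
move=> H; apply: functional_extensionality => x; apply: functional_extensionality => y.
exact: H.
Qed.

Lemma chol_aux (l : seq I) : forall A : op I, herm_op A -> psd_op A ->
  (forall x, x \notin l -> A x x = 0) -> exists s, A = outer s.
Proof.
elim: l => [|x l IH] A HA PA Hd.
  exists [::]; apply: funext2 => a b; rewrite /outer big_nil.
  by apply: psd_zero => //; apply: Hd.
case: (eqVneq (A x x) 0) => Hx.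
  apply: IH => // y Hy; case: (eqVneq y x) => [->//|ne]; apply: Hd.
  by rewrite inE negb_or ne Hy.
have Ax0 : 0 <= A x x.
  have := PA (fun a => 1 * delta x a); rewrite -/(bf A _ _) bf_delta.
  by rewrite rmorph1 !mul1r.
have s0 : 0 < A x x by rewrite lt_def Hx Ax0.
set r := sqrtC (A x x).
have r0 : 0 < r by rewrite sqrtC_gt0.
have rr : r * r = A x x by rewrite -expr2 sqrtCK.
have rc : r^* = r by apply: ge0_conj; apply: ltW.
have sc : (A x x)^* = A x x by apply: ge0_conj.
have rn0 : r != 0 by rewrite gt_eqF.
have sn0 : A x x != 0 by rewrite gt_eqF.
set c : vec I := fun a => A a x / r.
set S : op I := fun a b => A a b - c a * (c b)^*.
have HS : herm_op S.
  move=> a b; rewrite /S /c rmorphB /= !rmorphM /= conjCK !fmorphV /= ?rc //.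
  rewrite -(HA a b); congr (_ - _); ring.
have bfS : forall v, bf S v v = bf A v v - (dot c v)^* * dot c v.
  move=> v; rewrite /bf /S /dot.
  rewrite rmorph_sum /= mulr_suml -sumrB; apply: eq_bigr => a0 _.
  rewrite mulr_sumr -sumrB; apply: eq_bigr => b0 _.
  rewrite [((c a0)^* * v a0)^*]rmorphM /= conjCK; ring.
have PS : psd_op S.
  move=> v; rewrite -/(bf S _ _) bfS.
  set beta := bf A (delta x) v.
  have dcv : dot c v = beta / r.
    rewrite /beta bf_deltal /dot mulr_suml; apply: eq_bigr => b1 _.
    rewrite /c rmorphM /= -HA fmorphV /= ?rc //; move: (A x b1) (v b1) (r^-1) => p q t. exact (mulrAC p t q).
  set k := - (beta / A x x).
  have := PA (fun a => v a + k * delta x a); rewrite -/(bf A _ _).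
  rewrite bfDl !bfDr bf_delta !bfZl !bfZr -/beta -(herm_bf (delta x) v HA) -/beta.
  rewrite dcv rmorphM /= fmorphV /= ?rc // /k rmorphN rmorphM fmorphV /= ?sc //.
  move=> H.
  have E : bf A v v - beta^* / r * (beta / r) = bf A v v + - (beta / A x x) * beta^* +
    (- (beta^* / A x x) * beta + - (beta^* / A x x) * - (beta / A x x) * A x x).
    rewrite -rr; field; exact: rn0.
  by rewrite E.
have DS : forall y, y \notin l -> S y y = 0.
  move=> y Hy; case: (eqVneq y x) => [->|ne].
    rewrite /S /c rmorphM /= fmorphV /= ?rc // sc; apply/eqP; rewrite subr_eq0; apply/eqP.
    rewrite -rr; field; exact: rn0.
  have Ay : A y y = 0 by apply: Hd; rewrite inE negb_or ne Hy.
  have ge : 0 <= S y y.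
    have := PS (fun a => 1 * delta y a); rewrite -/(bf S _ _) bf_delta.
    by rewrite rmorph1 !mul1r.
  apply/eqP; rewrite eq_le ge andbT /S Ay sub0r oppr_le0.
  exact: mul_conjC_ge0.
have [s' Hs'] := IH S HS PS DS.
exists (c :: s'); apply: funext2 => a b; rewrite /outer big_cons -/(outer s' a b) -Hs' /S.
by rewrite addrC subrK.
Qed.

Lemma chol (A : op I) : herm_op A -> psd_op A -> exists s, A = outer s.
Proof.
move=> HA PA; apply: (@chol_aux (enum I)) => // x; by rewrite mem_enum.
Qed.

Lemma sum_rank (F : 'I_#|I| -> algC) : \sum_i F i = \sum_y F (enum_rank y).
Proof.
rewrite (reindex (@enum_rank I)) //; exists enum_val => y _; [exact: enum_rankK | exact: enum_valK].
Qed.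

Lemma range_of (A : op I) (b : vec I) : herm_op A ->
  (forall z : vec I, (forall x, apply_op A z x = 0) -> dot b z = 0) -> supp_op A b.
Proof.
move=> HA Hb.
pose M : 'M[algC]_#|I| := \matrix_(i, j) A (enum_val i) (enum_val j).
pose bt : 'rV[algC]_#|I| := \row_j b (enum_val j).
have : (bt <= M^T)%MS.
  rewrite submxE; apply/eqP/rowP => j; rewrite !mxE.
  set Kc := cokermx M^T.
  have HK := mulmx_coker M^T; rewrite -/Kc in HK.
  pose z : vec I := fun a => (Kc (enum_rank a) j)^*.
  have Hz : forall x, apply_op A z x = 0.
    move=> x; move/matrixP: HK => /(_ (enum_rank x) j); rewrite !mxE.
    move/(congr1 (@Num.conj _)); rewrite rmorph0 rmorph_sum /= => <-.
    rewrite /apply_op sum_rank; apply: eq_bigr => y _.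
    by rewrite /z rmorphM /= !mxE !enum_rankK (HA x y) conjCK.
  have H := Hb z Hz.
  transitivity ((dot b z)^*); last by rewrite H rmorph0.
  rewrite /dot rmorph_sum /= sum_rank; apply: eq_bigr => y _.
  by rewrite /z !mxE enum_rankK rmorphM /= !conjCK.
move/submxP => [u Hu].
exists (fun y => u 0 (enum_rank y)); apply: functional_extensionality => x.
move/matrixP: Hu => /(_ 0 (enum_rank x)); rewrite !mxE enum_rankK => ->.
rewrite /apply_op sum_rank; apply: eq_bigr => y _.
by rewrite !mxE !enum_rankK mulrC.
Qed.

End Gen.
Section Cfg.
Variables (N : nat) (d : 'I_N -> nat) (S : {set 'I_N}).

Lemma supp0 (T : {set 'I_N}) (u : cfgS d T) a : a \notin T -> val u a = ord0.
Proof. move=> Ha; have := valP u; move/forallP/(_ a)/implyP/(_ Ha)/eqP; done. Qed.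

Lemma join_rst (x : cfg d) : join (rst S x) (rst (~:S) x) = x.
Proof.
apply/ffunP => a; rewrite /join ffunE /= /rst_fun !ffunE inE.
by case: (a \in S).
Qed.

Lemma rst_join (u : cfgS d S) (w : cfgS d (~:S)) : rst S (join u w) = u.
Proof.
apply: val_inj; apply/ffunP => a; rewrite /= /rst_fun /join !ffunE.
case: (boolP (a \in S)) => Ha //; by rewrite supp0.
Qed.

Lemma rstC_join (u : cfgS d S) (w : cfgS d (~:S)) : rst (~:S) (join u w) = w.
Proof.
apply: val_inj; apply/ffunP => a; rewrite /= /rst_fun /join !ffunE inE.
case: (boolP (a \in S)) => Ha //=.
by rewrite supp0 // inE Ha.
Qed.

Lemma sum_split (F : cfg d -> algC) :
  \sum_x F x = \sum_u \sum_w F (join (S := S) u w).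
Proof.
rewrite pair_bigA /=.
rewrite (reindex (fun p : cfgS d S * cfgS d (~:S) => join p.1 p.2)) //=.
exists (fun x => (rst S x, rst (~:S) x)) => [[u w] _ | x _] /=.
  by rewrite rst_join rstC_join.
exact: join_rst.
Qed.

Lemma sum_ifeq (T : finType) (j : T) (F : T -> algC) :
  \sum_i (if i == j then F i else 0) = F j.
Proof. by rewrite -big_mkcond big_pred1_eq. Qed.

Lemma tensI_join (B : op (cfgS d S)) u1 w1 u2 w2 :
  tensI B (join u1 w1) (join u2 w2) = if w1 == w2 then B u1 u2 else 0.
Proof. by rewrite /tensI !rstC_join !rst_join. Qed.

Lemma trace_tensI (B : op (cfgS d S)) (sg : op (cfg d)) :
  \sum_x \sum_y tensI B x y * sg y x =
  \sum_u \sum_u2 B u u2 * ptrace S sg u2 u.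
Proof.
rewrite sum_split; apply: eq_bigr => u _.
transitivity (\sum_w1 \sum_u2 B u u2 * sg (join u2 w1) (join u w1)).
  apply: eq_bigr => w1 _; rewrite sum_split; apply: eq_bigr => u2 _.
  rewrite -(sum_ifeq w1 (fun w2 => B u u2 * sg (join u2 w2) (join u w1))).
  apply: eq_bigr => w2 _; rewrite tensI_join eq_sym.
  by case: ifP => [/eqP -> |]; rewrite ?mul0r.
rewrite exchange_big; apply: eq_bigr => u2 _; rewrite /ptrace mulr_sumr.
by [].
Qed.

Definition lift (w : cfgS d (~:S)) (f : vec (cfgS d S)) : vec (cfg d) :=
  fun x => if rst (~:S) x == w then f (rst S x) else 0.

Lemma lift_join w f u w' : lift w f (join u w') = if w' == w then f u else 0.
Proof. by rewrite /lift rstC_join rst_join. Qed.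

Lemma bf_ptrace (sg : op (cfg d)) z1 :
  bf (ptrace S sg) z1 z1 = \sum_w bf sg (lift w z1) (lift w z1).
Proof.
have E : forall w, bf sg (lift w z1) (lift w z1) =
  \sum_u \sum_u2 (z1 u)^* * sg (join u w) (join u2 w) * z1 u2.
  move=> w; rewrite /bf sum_split; apply: eq_bigr => u _.
  transitivity (\sum_w1 (if w1 == w then \sum_y (z1 u)^* * sg (join u w1) y * lift w z1 y else 0)).
    apply: eq_bigr => w1 _; rewrite lift_join; case: eqP => _; first by [].
    by apply: big1 => y _; rewrite rmorph0 !mul0r.
  rewrite sum_ifeq sum_split; apply: eq_bigr => u2 _.
  transitivity (\sum_w2 (if w2 == w then (z1 u)^* * sg (join u w) (join u2 w2) * z1 u2 else 0)).
    apply: eq_bigr => w2 _; rewrite lift_join; case: eqP => _; by rewrite ?mulr0.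
  by rewrite sum_ifeq.
under eq_bigr => w _ do rewrite E.
rewrite exchange_big; apply: eq_bigr => u _.
rewrite exchange_big; apply: eq_bigr => u2 _.
rewrite /ptrace mulr_sumr mulr_suml; apply: eq_bigr => w _; by [].
Qed.

Lemma apply_tensI (B : op (cfgS d S)) z u w1 :
  apply_op (tensI B) z (join u w1) = apply_op B (fun u2 => z (join u2 w1)) u.
Proof.
rewrite /apply_op sum_split; apply: eq_bigr => u2 _.
rewrite -(sum_ifeq w1 (fun w2 => B u u2 * z (join u2 w2))).
apply: eq_bigr => w2 _; rewrite tensI_join eq_sym.
by case: ifP => [/eqP -> |]; rewrite ?mul0r.
Qed.

Lemma dot_split (v z : vec (cfg d)) :
  dot v z = \sum_w dot v (lift w (fun u => z (join u w))).
Proof.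
rewrite /dot sum_split exchange_big; apply: eq_bigr => w _.
symmetry; rewrite sum_split exchange_big.
transitivity (\sum_w1 (if w1 == w then \sum_u (v (join u w1))^* * z (join u w1) else 0)).
  apply: eq_bigr => w1 _; case: eqP => [->|ne].
    by apply: eq_bigr => u _; rewrite lift_join eqxx.
  by apply: big1 => u _; rewrite lift_join (introF eqP ne) mulr0.
by rewrite sum_ifeq.
Qed.

Lemma herm_ptrace (sg : op (cfg d)) : herm_op sg -> herm_op (ptrace S sg).
Proof.
move=> H u v; rewrite /ptrace rmorph_sum; apply: eq_bigr => w _; exact: H.
Qed.

Lemma herm_tensI (B : op (cfgS d S)) : herm_op B -> herm_op (tensI B).
Proof.
move=> H x y; rewrite /tensI eq_sym; case: ifP => _; by rewrite ?rmorph0.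
Qed.

End Cfg.
Section Gen2.
Variable I : finType.

Definition tr2 (A B : op I) : algC := \sum_x \sum_y A x y * B y x.
Definition nrm (v : vec I) : algC := \sum_x v x * (v x)^*.

Lemma expect_tr (A : op I) phi : expect_op A phi = tr2 A (proj_op phi).
Proof.
rewrite /expect_op /tr2 /proj_op; apply: eq_bigr => x _; apply: eq_bigr => y _.
ring.
Qed.

Lemma tr2_outer (A : op I) s : tr2 A (outer s) = \sum_(v <- s) expect_op A v.
Proof.
rewrite /tr2 /outer /expect_op.
under eq_bigr => x _ do under eq_bigr => y _ do rewrite mulr_sumr.
under eq_bigr => x _ do rewrite exchange_big /=.
rewrite exchange_big /=; apply: eq_bigr => v _; apply: eq_bigr => x _; apply: eq_bigr => y _.
ring.
Qed.

Lemma trace_outer s : \sum_x outer s x x = \sum_(v <- s) nrm v.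
Proof. by rewrite /outer exchange_big. Qed.

Lemma bf_outer s (y : vec I) : bf (outer s) y y = \sum_(v <- s) (dot v y)^* * dot v y.
Proof.
rewrite /bf /outer.
under eq_bigr => x _ do under eq_bigr => x' _ do rewrite mulr_sumr mulr_suml.
under eq_bigr => x _ do rewrite exchange_big /=.
rewrite exchange_big /=; apply: eq_bigr => v _.
rewrite /dot rmorph_sum mulr_suml; apply: eq_bigr => x _.
rewrite mulr_sumr; apply: eq_bigr => x' _.
rewrite rmorphM /= conjCK; ring.
Qed.

Lemma sum_seq_eq0 (T : Type) (s : seq T) (F : T -> algC) :
  (forall v, List.In v s -> 0 <= F v) -> \sum_(v <- s) F v = 0 ->
  forall v, List.In v s -> F v = 0.
Proof.
elim: s => [|a s IH] H0 Hs v //.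
rewrite big_cons in Hs.
have Ha : 0 <= F a by apply: H0; left.
have Hr : 0 <= \sum_(v <- s) F v.
  elim: s {IH Hs} H0 => [|b s' IH'] H0; first by rewrite big_nil.
  rewrite big_cons addr_ge0 //; first by apply: H0; right; left.
  apply: IH' => i Hi; apply: H0; case: Hi => [->|Hi]; [by left | by right; right].
move/eqP: Hs; rewrite paddr_eq0 // => /andP [/eqP Fa /eqP Fs].
case=> [<- // | Hv].
apply: IH => // i Hi; apply: H0; by right.
Qed.

Lemma bf_apply0 (A : op I) z : (forall x, apply_op A z x = 0) -> bf A z z = 0.
Proof.
move=> H; rewrite /bf big1 // => x _.
transitivity ((z x)^* * apply_op A z x); last by rewrite H mulr0.
rewrite /apply_op mulr_sumr; apply: eq_bigr => y _; by rewrite mulrA.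
Qed.

Lemma herm_proj (psi : vec I) : herm_op (proj_op psi).
Proof. move=> x y; by rewrite /proj_op rmorphM /= conjCK mulrC. Qed.

Lemma nrm_ge0 v : 0 <= nrm v.
Proof. apply: sumr_ge0 => x _; exact: mul_conjC_ge0. Qed.

Lemma nrm_eq0 v : nrm v = 0 -> forall x, v x = 0.
Proof.
move=> H x; apply/eqP; rewrite -mul_conjC_eq0; apply/eqP.
by apply: (psumr_eq0P (P := predT) (fun i _ => mul_conjC_ge0 (v i)) H).
Qed.

End Gen2.
Section Scale.
Variable I : finType.
Variables (r : algC) (rc : r^* = r) (rn0 : r != 0).

Lemma nrm_scale (v : vec I) : nrm (fun x => v x / r) = nrm v / (r * r).
Proof.
rewrite /nrm mulr_suml; apply: eq_bigr => x _.
rewrite rmorphM /= fmorphV /= rc; field; exact: rn0.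
Qed.

Lemma dot_scale (v z : vec I) : dot (fun x => v x / r) z = dot v z / r.
Proof.
rewrite /dot mulr_suml; apply: eq_bigr => x _.
rewrite rmorphM /= fmorphV /= rc; field; exact: rn0.
Qed.

Lemma expect_scale (A : op I) (v : vec I) :
  expect_op A (fun x => v x / r) = expect_op A v / (r * r).
Proof.
rewrite /expect_op mulr_suml; apply: eq_bigr => x _.
rewrite mulr_suml; apply: eq_bigr => y _.
rewrite rmorphM /= fmorphV /= rc; field; exact: rn0.
Qed.
End Scale.

Lemma tr2_Wsum (N : nat) (d : 'I_N -> nat) (K : nat) (nb : 'I_K -> {set 'I_N})
  (Wk : forall k : 'I_K, op (cfgS d (nb k))) (sg : op (cfg d)) :
  tr2 (Wsum Wk) sg = \sum_k \sum_u \sum_u2 Wk k u u2 * ptrace (nb k) sg u2 u.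
Proof.
rewrite /tr2 /Wsum.
under eq_bigr => x _ do under eq_bigr => y _ do rewrite mulr_suml.
under eq_bigr => x _ do rewrite exchange_big /=.
rewrite exchange_big /=; apply: eq_bigr => k _; exact: trace_tensI.
Qed.
Lemma mul_Cconj_ge0 (x : algC) : 0 <= x^* * x.
Proof. rewrite mulrC; exact: mul_conjC_ge0. Qed.

Lemma seq_eq_In (T : Type) (s : seq T) (F G : T -> algC) :
  (forall v, List.In v s -> F v = G v) -> \sum_(v <- s) F v = \sum_(v <- s) G v.
Proof.
elim: s => [|a s IH] H; first by rewrite !big_nil.
rewrite !big_cons (H a (or_introl erefl)) IH // => v Hv; apply: H; by right.
Qed.

Unset Implicit Arguments.
Set Strict Implicit.

Theorem mainTheorem3 (N : nat) (d : 'I_N -> nat) (K : nat)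
  (nb : 'I_K -> {set 'I_N}) (psi : vec (cfg d))
  (Wk : forall k : 'I_K, op (cfgS d (nb k))) :
  normalized_vec psi ->
  nontrivial_nbhd nb ->
  herm_op (Wsum Wk) ->
  (forall phi : vec (cfg d), normalized_vec phi -> DQLS nb psi phi ->
     proj_op phi <> proj_op psi -> expect_op (Wsum Wk) psi < expect_op (Wsum Wk) phi) ->
  UDA nb (proj_op psi).
Proof.
move=> _ _ _ Hmin sg [Hh [Hp Htr]] Hmarg.
have [s Hs] := chol Hh Hp.
set rho := proj_op psi.
set W := Wsum Wk.
set e := expect_op W psi.
have Hker : forall v, List.In v s -> forall k (z : vec (cfg d)),
    (forall x, apply_op (tensI (ptrace (nb k) rho)) z x = 0) -> dot v z = 0.
  move=> v vs k z Hz.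
  rewrite (@dot_split _ _ (nb k)) big1 // => w _.
  set z1 := fun u => z (join u w).
  have Az1 : forall u, apply_op (ptrace (nb k) sg) z1 u = 0.
    by move=> u; rewrite Hmarg -apply_tensI Hz.
  have B0 := bf_apply0 Az1.
  rewrite bf_ptrace in B0.
  have B1 := psumr_eq0P (P := predT) (fun w _ => Hp (lift w z1)) B0 (i := w) isT.
  rewrite -/(bf sg _ _) Hs bf_outer in B1.
  have := sum_seq_eq0 (fun v _ => mul_Cconj_ge0 _) B1 vs.
  move/eqP; rewrite mulrC mul_conjC_eq0 => /eqP; by [].
have Hv : forall v, List.In v s ->
    0 < expect_op W v - e * nrm v \/
    (expect_op W v - e * nrm v = 0 /\ forall x y, v x * (v y)^* = nrm v * rho x y).
  move=> v vs.
  have [n0|nn0] := eqVneq (nrm v) 0.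
    have v0 := nrm_eq0 n0.
    right; split.
      rewrite n0 mulr0 subr0 /expect_op big1 // => x _; rewrite v0 rmorph0.
      by apply: big1 => y _; rewrite !mul0r.
    by move=> x y; rewrite v0 n0 !mul0r.
  have npos : 0 < nrm v by rewrite lt_def nn0 nrm_ge0.
  set r := sqrtC (nrm v).
  have r0 : 0 < r by rewrite sqrtC_gt0.
  have rr : r * r = nrm v by rewrite -expr2 sqrtCK.
  have rc : r^* = r by apply: ge0_conj; apply: ltW.
  have rn0 : r != 0 by rewrite gt_eqF.
  set phi : vec (cfg d) := fun x => v x / r.
  have Nphi : normalized_vec phi.
    by rewrite /normalized_vec -/(nrm phi) nrm_scale // rr divff.
  have Dphi : DQLS nb psi phi.
    move=> k; apply: range_of.
      apply: herm_tensI; apply: herm_ptrace; exact: herm_proj.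
    by move=> z Hz; rewrite /phi dot_scale // (Hker v vs k z Hz) mul0r.
  have Ev : expect_op W v = nrm v * expect_op W phi.
    by rewrite /phi expect_scale // rr mulrC divfK.
  case: (classic (proj_op phi = proj_op psi)) => Hpp.
    right; split.
      by rewrite Ev expect_tr Hpp -expect_tr -/e mulrC subrr.
    move=> x y; have := congr1 (fun f => f x y) Hpp; rewrite /rho /proj_op /= => <-.
    rewrite /phi rmorphM /= fmorphV /= rc -rr; field; exact: rn0.
  left; have := Hmin phi Nphi Dphi Hpp; rewrite -/W -/e => He.
  rewrite Ev [e * _]mulrC -mulrBr; apply: mulr_gt0 => //; by rewrite subr_gt0.
have T : tr2 W sg = e.
  rewrite /e expect_tr /W !tr2_Wsum; apply: eq_bigr => k _; by rewrite Hmarg.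
have Sum0 : \sum_(v <- s) (expect_op W v - e * nrm v) = 0.
  by rewrite sumrB -mulr_sumr -tr2_outer -trace_outer -Hs Htr mulr1 T subrr.
have Hge : forall v, List.In v s -> 0 <= expect_op W v - e * nrm v.
  move=> v vs; case: (Hv v vs) => [/ltW // | [-> _] //].
have D0 := sum_seq_eq0 Hge Sum0.
rewrite Hs; apply: funext2 => x y; rewrite /outer.
transitivity (\sum_(v <- s) nrm v * rho x y).
  apply: seq_eq_In => v vs.
  case: (Hv v vs) => [H | [_ ->] //].
  by move: H; rewrite (D0 v vs) ltxx.
by rewrite -mulr_suml -trace_outer -Hs Htr mul1r.
Qed.
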